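(* Let $n\neq 1$ be a real number, $k_n=n-1$, and $k_0,k_1,k_2\in\mathbb{R}$. On the phase space with canonical coordinates $(r,\phi,p_r,p_\phi)$, $r>0$, restricted to the open set where $\cos(k_n\phi)\neq 0$, consider $$H_{nc2}=\tfrac12 r^{2n}\Big(p_r^2+\tfrac{p_\phi^2}{r^2}\Big)+k_0r^{n-1}+r^{2k_n}\Big(\frac{k_1}{\cos^2(k_n\phi)}+k_2\frac{\sin(k_n\phi)}{\cos^2(k_n\phi)}\Big).$$ With $P_1=r^n\big(p_r\cos(k_n\phi)+\tfrac1r p_\phi\sin(k_n\phi)\big)$, the functions $$J_{c2}=p_\phi^2+2\Big(\frac{k_1}{\cos^2(k_n\phi)}+k_2\frac{\sin(k_n\phi)}{\cos^2(k_n\phi)}\Big),$$ $$J_{c3}=P_1p_\phi+k_0\sin(k_n\phi)+2k_1r^{k_n}\sec(k_n\phi)\tan(k_n\phi)+k_2r^{k_n}\big(\sec^2(k_n\phi)+\tan^2(k_n\phi)\big)$$ are constants of motion of $H_{nc2}$, i.e. $\{J_{c2},H_{nc2}\}=0$ and $\{J_{c3},H_{nc2}\}=0$; hence $H_{nc2}$ is superintegrable.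
   Context: The Poisson bracket is the canonical one in $(r,\phi,p_r,p_\phi)$. A constant of motion of $H$ is a function $F$ with $\{F,H\}=0$. *)

(* Defs.v *)
From Stdlib Require Import Reals.
From Coquelicot Require Import Coquelicot.
Open Scope R_scope.

Definition PhaseFun := R -> R -> R -> R -> R.

Definition d_r (F : PhaseFun) r ph pr pph := Derive (fun t => F t ph pr pph) r.
Definition d_phi (F : PhaseFun) r ph pr pph := Derive (fun t => F r t pr pph) ph.
Definition d_pr (F : PhaseFun) r ph pr pph := Derive (fun t => F r ph t pph) pr.
Definition d_pphi (F : PhaseFun) r ph pr pph := Derive (fun t => F r ph pr t) pph.

Definition poisson (F G : PhaseFun) : PhaseFun := fun r ph pr pph =>
  d_r F r ph pr pph * d_pr G r ph pr pph - d_pr F r ph pr pph * d_r G r ph pr pph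
  + d_phi F r ph pr pph * d_pphi G r ph pr pph - d_pphi F r ph pr pph * d_phi G r ph pr pph.

(* r^a for r > 0 and real exponent a *)
Definition rpow (r a : R) : R := Rpower r a.

Definition V2 (k1 k2 kn ph : R) : R :=
  k1 / (cos (kn * ph))^2 + k2 * sin (kn * ph) / (cos (kn * ph))^2.

Definition H_nc2 (n k0 k1 k2 : R) : PhaseFun := fun r ph pr pph =>
  / 2 * rpow r (2 * n) * (pr ^ 2 + pph ^ 2 / r ^ 2)
  + k0 * rpow r (n - 1)
  + rpow r (2 * (n - 1)) * V2 k1 k2 (n - 1) ph.

Definition P1 (n : R) : PhaseFun := fun r ph pr pph =>
  rpow r n * (pr * cos ((n - 1) * ph) + / r * pph * sin ((n - 1) * ph)).

Definition J_c2 (n k1 k2 : R) : PhaseFun := fun r ph pr pph =>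
  pph ^ 2 + 2 * V2 k1 k2 (n - 1) ph.

Definition J_c3 (n k0 k1 k2 : R) : PhaseFun := fun r ph pr pph =>
  let kn := n - 1 in
  P1 n r ph pr pph * pph + k0 * sin (kn * ph)
  + 2 * k1 * rpow r kn * (/ cos (kn * ph)) * tan (kn * ph)
  + k2 * rpow r kn * ((/ cos (kn * ph)) ^ 2 + (tan (kn * ph)) ^ 2).

(* Main.v *)
Require Import Defs.
From Stdlib Require Import Reals Lra Nsatz.
From Coquelicot Require Import Coquelicot.
Open Scope R_scope.

Lemma eA2 (a r : R) : 0 < r -> exp (2*a*ln r) = exp (a*ln r)^2.
Proof. intros. replace (2*a*ln r) with (a*ln r + a*ln r) by ring. rewrite exp_plus; ring. Qed.
Lemma e2n (n r : R) : 0 < r -> exp (2*n*ln r) = exp ((n-1)*ln r)^2 * r^2.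
Proof. intros. replace (2*n*ln r) with ((n-1)*ln r + (n-1)*ln r + ln r + ln r) by ring.
 rewrite !exp_plus, exp_ln; auto; ring. Qed.
Lemma e2k (n r : R) : 0 < r -> exp (2*(n-1)*ln r) = exp ((n-1)*ln r)^2.
Proof. intros. apply eA2; auto. Qed.
Lemma en (n r : R) : 0 < r -> exp (n*ln r) = exp ((n-1)*ln r) * r.
Proof. intros. replace (n*ln r) with ((n-1)*ln r + ln r) by ring.
 rewrite !exp_plus, exp_ln; auto. Qed.

Ltac nz := repeat split; auto; repeat (apply Rmult_integral_contrapositive_currified); try lra; auto.

Section S.
Variables n k0 k1 k2 r ph pr pph : R.
Hypothesis hr : 0 < r.
Hypothesis hc : cos ((n-1)*ph) <> 0.
Let A := exp ((n-1)*ln r).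
Let c := cos ((n-1)*ph).
Let s := sin ((n-1)*ph).
Let k := n-1.
Ltac fin A c s k := unfold A, c, s, k; try rewrite (e2n n r); try rewrite (e2k n r); try rewrite (en n r); auto; field; nz.

Lemma dH_r : d_r (H_nc2 n k0 k1 k2) r ph pr pph =
  n*A^2*r*pr^2 + k*A^2*pph^2/r + k0*k*A/r + 2*k*A^2*(k1+k2*s)/c^2/r.
Proof.
  unfold d_r, H_nc2, rpow, Rpower, V2. apply is_derive_unique. auto_derive.
  - nz.
  - fin A c s k.
Qed.
Lemma dH_pr : d_pr (H_nc2 n k0 k1 k2) r ph pr pph = A^2*r^2*pr.
Proof.
  unfold d_pr, H_nc2, rpow, Rpower, V2. apply is_derive_unique. auto_derive.
  - nz.
  - fin A c s k.
Qed.
Lemma dH_pph : d_pphi (H_nc2 n k0 k1 k2) r ph pr pph = A^2*pph.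
Proof.
  unfold d_pphi, H_nc2, rpow, Rpower, V2. apply is_derive_unique. auto_derive.
  - nz.
  - fin A c s k.
Qed.
Lemma dH_ph : d_phi (H_nc2 n k0 k1 k2) r ph pr pph = A^2*k*(k2*c^2 + 2*s*(k1+k2*s))/c^3.
Proof.
  unfold d_phi, H_nc2, rpow, Rpower, V2. apply is_derive_unique. auto_derive.
  - nz.
  - fin A c s k.
Qed.
Let W := 2*k1*s + k2*(1+s^2).
Lemma dJ_r : d_r (J_c3 n k0 k1 k2) r ph pr pph =
  k*A/r*(r*pr*c*pph + s*pph^2 + W/c^2) + A*pr*c*pph.
Proof.
  unfold d_r, J_c3, Defs.P1, rpow, Rpower, tan. cbv zeta. unfold Defs.P1, rpow, Rpower. apply is_derive_unique. auto_derive.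
  - nz.
  - unfold W. fin A c s k.
Qed.
Lemma dJ_pr : d_pr (J_c3 n k0 k1 k2) r ph pr pph = A*r*c*pph.
Proof.
  unfold d_pr, J_c3, Defs.P1, rpow, Rpower, tan. cbv zeta. unfold Defs.P1, rpow, Rpower. apply is_derive_unique. auto_derive.
  - nz.
  - fin A c s k.
Qed.
Lemma dJ_pph : d_pphi (J_c3 n k0 k1 k2) r ph pr pph = A*r*pr*c + 2*A*s*pph.
Proof.
  unfold d_pphi, J_c3, Defs.P1, rpow, Rpower, tan. cbv zeta. unfold Defs.P1, rpow, Rpower. apply is_derive_unique. auto_derive.
  - nz.
  - fin A c s k.
Qed.
Lemma dJ_ph : d_phi (J_c3 n k0 k1 k2) r ph pr pph =
  k*(- A*r*pr*s*pph + A*c*pph^2 + k0*c + A*((2*k1*c + 2*k2*s*c)*c^2 + W*2*c*s)/c^4).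
Proof.
  unfold d_phi, J_c3, Defs.P1, rpow, Rpower, tan. cbv zeta. unfold Defs.P1, rpow, Rpower. apply is_derive_unique. auto_derive.
  - nz.
  - unfold W. fin A c s k.
Qed.
Lemma dK_r : d_r (J_c2 n k1 k2) r ph pr pph = 0.
Proof. unfold d_r, J_c2. apply Derive_const. Qed.
Lemma dK_pr : d_pr (J_c2 n k1 k2) r ph pr pph = 0.
Proof. unfold d_pr, J_c2. apply Derive_const. Qed.
Lemma dK_pph : d_pphi (J_c2 n k1 k2) r ph pr pph = 2*pph.
Proof.
  unfold d_pphi, J_c2, V2. apply is_derive_unique. auto_derive.
  - nz.
  - fin A c s k.
Qed.
Lemma dK_ph : d_phi (J_c2 n k1 k2) r ph pr pph = 2*k*(k2*c^2 + 2*s*(k1+k2*s))/c^3.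
Proof.
  unfold d_phi, J_c2, V2. apply is_derive_unique. auto_derive.
  - nz.
  - fin A c s k.
Qed.
Lemma sc : s^2 + c^2 = 1.
Proof. unfold s, c. pose proof (sin2_cos2 ((n-1)*ph)) as H. unfold Rsqr in H. rewrite <- H at 3. ring. Qed.

Lemma main : 
    poisson (J_c2 n k1 k2) (H_nc2 n k0 k1 k2) r ph pr pph = 0 /\
    poisson (J_c3 n k0 k1 k2) (H_nc2 n k0 k1 k2) r ph pr pph = 0.
Proof.
  unfold poisson. rewrite dK_r, dK_pr, dK_pph, dK_ph, dJ_r, dJ_pr, dJ_pph, dJ_ph,
   dH_r, dH_pr, dH_pph, dH_ph.
  assert (hc' : c <> 0) by exact hc.
  assert (hr' : r <> 0) by lra.
  pose proof sc as E.
  assert (Hk : n = k + 1) by (unfold k; ring).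
  unfold W. clearbody A c s k. subst n.
  split.
  - field. auto.
  - field_simplify_eq; auto.
    transitivity (-(k*A^3*c*k2*(r*pr*c+2*pph*s))*(s^2+c^2-1)); [ring|]. rewrite E; ring.
Qed.
End S.

Theorem mainTheorem8 (n k0 k1 k2 : R) :
  n <> 1 ->
  forall r ph pr pph : R,
    0 < r -> cos ((n - 1) * ph) <> 0 ->
    poisson (J_c2 n k1 k2) (H_nc2 n k0 k1 k2) r ph pr pph = 0 /\
    poisson (J_c3 n k0 k1 k2) (H_nc2 n k0 k1 k2) r ph pr pph = 0.
Proof.
  intros _ r ph pr pph hr hc. exact (main n k0 k1 k2 r ph pr pph hr hc).
Qed.
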